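(* Let $\mathcal{R}$ be a left-connected rewriting system over a signature $\Sigma$, let $L_i,L_j$ be left-hand sides of rules of $\mathcal{R}$, and let $S_{ij\gamma}$ (with $\epsilon_{ij\gamma}\colon L_i+L_j\to S_{ij\gamma}$) be a hyperedge gluing and $S_{ij\gamma'}$ (with $\epsilon_{ij\gamma'}\colon S_{ij\gamma}\to S_{ij\gamma'}$) a subsequent node gluing, as described below, such that $S_{ij\gamma'}$ yields a critical pair. Then for every left-hand side $L$ of a rule of $\mathcal{R}$ and every convex match $m\colon L\to S_{ij\gamma}$ (into the ma-cospan $in(S_{ij\gamma})\to S_{ij\gamma}\leftarrow out(S_{ij\gamma})$), the composite $m;\epsilon_{ij\gamma'}\colon L\to S_{ij\gamma'}$ is a convex match (into the ma-cospan $in(S_{ij\gamma'})\to S_{ij\gamma'}\leftarrow out(S_{ij\gamma'})$).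
   Context: A signature $\Sigma$ is a set of triples $(x,n,m)$ (label, arity, coarity). A $\Sigma$-hypergraph $G=(V,E,s,t,l)$ has finite sets $V$ (nodes), $E$ (hyperedges), maps $s,t\colon E\to V^*$ (lists of sources/targets) and a labelling $l\colon E\to\Sigma$ sending a hyperedge with $n$ sources and $m$ targets to some $(x,n,m)$. Morphisms preserve sources, targets and labels; they form the category $\mathbf{Hyp}_\Sigma$, where colimits are computed componentwise and monos/epis are injective/surjective on nodes and hyperedges. Composition is written $f;g$; $\iota_1,\iota_2$ are coprojections. A hypergraph is discrete if it has no hyperedges. A path is a list of hyperedges $[e_1,\dots,e_n]$ with some target of $e_k$ equal to a source of $e_{k+1}$ for each $k$; it goes from $v$ to $v'$ if $v$ is a source of $e_1$ and $v'$ a target of $e_n$; a cycle is a path with some source of $e_1$ a target of $e_n$. In-degree (out-degree) of a node $v$: number of pairs $(e,i)$ with $v$ the $i$-th target (source) of $e$; $in(H)$, $out(H)$: nodes of in-degree $0$, out-degree $0$. $H$ is ma (monogamous acyclic) if it has no cycle and all in- and out-degrees are $\le 1$. A cospan $I\to H\leftarrow O$ with $I,O$ discrete is an ma-cospan if $H$ is ma and the legs are mono with images $in(H)$ and $out(H)$. $H$ is strongly connected if for all $x\in in(H)$, $y\in out(H)$ there is a path from $x$ to $y$. A left-connected rule is a span $L\xleftarrow{[i_L,o_L]}K=I+O\xrightarrow{[i_R,o_R]}R$ with $I,O$ discrete, $I\to L\leftarrow O$, $I\to R\leftarrow O$ ma-cospans, $[i_L,o_L]$ mono, $L$ strongly connected;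 a left-connected rewriting system is a finite set of such rules. A convex match is a mono $m\colon L\to G$ such that for any nodes $v,v'$ of $m(L)$ and any path in $G$ from $v$ to $v'$, all hyperedges of the path lie in $m(L)$; for left-connected systems it is known that every mono match of a left-hand side is convex. Derivations between ma-cospans are given by a rule, a convex match and a double pushout diagram commuting with the interface. A pre-critical pair is a pair of derivations from a common ma-cospan $n\to S\leftarrow m$ with matches $m_1\colon L_i\to S$, $m_2\colon L_j\to S$ such that $[m_1,m_2]$ is epi; it is parallel if $m_1$ factors through the pushout complement $C_2\to S$ of the second derivation and $m_2$ through the pushout complement $C_1\to S$ of the first; critical if not parallel. Hyperedge gluing: let $M$ be a nonempty set of pairs $(e,e')$, $e$ a hyperedge of $L_i$, $e'$ of $L_j$, with equal labels, no hyperedge in two pairs; $\gamma$ has hyperedges $M$ and nodes the pairs $(v,v')$ that are $k$-th sources (or $k$-th targets) of $e,e'$ for some $(e,e')\in M$ and $k$, with projections $p_1^\gamma\colon\gamma\to L_i$, $p_2^\gamma\colon\gamma\to L_j$; $\epsilon_{ij\gamma}\colon L_i+L_j\to S_{ij\gamma}$ is the coequaliser of $p_1^\gamma;\iota_1$ and $p_2^\gamma;\iota_2$. Node gluing: with $I_1=in(S_{ij\gamma})\cap\epsilon_{ij\gamma}(\iota_1(in(L_i)))$, $I_2=in(S_{ij\gamma})\cap\epsilon_{ij\gamma}(\iota_2(in(L_j)))$, $O_1=out(S_{ij\gamma})\cap\epsilon_{ij\gamma}(\iota_1(out(L_i)))$, $O_2=out(S_{ij\gamma})\cap\epsilon_{ij\gamma}(\iota_2(out(L_j)))$,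 let $N$ be a set of pairs in $I_1\times O_2$, or in $I_2\times O_1$, with no element in two pairs; $\gamma'$ is the discrete hypergraph with nodes $N$ and projections $p_1^{\gamma'},p_2^{\gamma'}\colon\gamma'\to S_{ij\gamma}$; $\epsilon_{ij\gamma'}\colon S_{ij\gamma}\to S_{ij\gamma'}$ is their coequaliser. $S_{ij\gamma'}$ yields a critical pair if the matches $\iota_k;\epsilon_{ij\gamma};\epsilon_{ij\gamma'}$ ($k=1,2$) are mono, $in(S_{ij\gamma'})\xrightarrow{\subseteq}S_{ij\gamma'}\xleftarrow{\subseteq}out(S_{ij\gamma'})$ is an ma-cospan, and the derivations from it with these matches form a critical pair. *)

(* Defs.v *)
From Stdlib Require List.
From HB Require Import structures.
From mathcomp Require Import ssreflect ssrfun ssrbool eqtype ssrnat seq path choice fintype finfun bigop finset.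
Set Implicit Arguments. Unset Strict Implicit. Unset Printing Implicit Defensive.

(* A signature: a type of labels, each carrying an arity and a coarity.
   (A label of the signature is a triple (x,n,m); sarity/scoarity give n,m.) *)
Record signature := Signature {
  slabel : Type; sarity : slabel -> nat; scoarity : slabel -> nat }.

Section Hyp.
Variable Sg : signature.

Record hypergraph := Hypergraph {
  hV : finType; hE : finType;
  hsrc : hE -> seq hV; htgt : hE -> seq hV; hlab : hE -> slabel Sg }.

Definition wf_hg (G : hypergraph) : Prop :=
  forall e : hE G, size (hsrc e) = sarity (hlab e) /\ size (htgt e) = scoarity (hlab e).

Record hom (G H : hypergraph) := Hom { mV : hV G -> hV H; mE : hE G -> hE H }.

Definition is_hom G H (f : hom G H) : Prop :=
  (forall e, hsrc (mE f e) = map (mV f) (hsrc e)) /\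
  (forall e, htgt (mE f e) = map (mV f) (htgt e)) /\
  (forall e, hlab (mE f e) = hlab e).

(* composition in diagrammatic order: hcomp f g = f;g *)
Definition hcomp G H K (f : hom G H) (g : hom H K) : hom G K :=
  Hom (mV g \o mV f) (mE g \o mE f).

Definition homeq G H (f g : hom G H) : Prop := mV f =1 mV g /\ mE f =1 mE g.

Definition mono G H (f : hom G H) : Prop := injective (mV f) /\ injective (mE f).
Definition epi G H (f : hom G H) : Prop :=
  (forall y, exists x, mV f x = y) /\ (forall y, exists x, mE f x = y).

Definition discrete (G : hypergraph) : Prop := #|hE G| = 0.

Definition hsum (G H : hypergraph) : hypergraph :=
  @Hypergraph (hV G + hV H)%type (hE G + hE H)%type
    (fun e => match e with inl e => map inl (hsrc e) | inr e => map inr (hsrc e) end)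
    (fun e => match e with inl e => map inl (htgt e) | inr e => map inr (htgt e) end)
    (fun e => match e with inl e => hlab e | inr e => hlab e end).

Definition iota1 G H : hom G (hsum G H) := @Hom G (hsum G H) (@inl _ _) (@inl _ _).
Definition iota2 G H : hom H (hsum G H) := @Hom H (hsum G H) (@inr _ _) (@inr _ _).
Definition copair G H K (f : hom G K) (g : hom H K) : hom (hsum G H) K :=
  @Hom (hsum G H) K (fun (v : hV G + hV H) => match v with inl v => mV f v | inr v => mV g v end)
      (fun (e : hE G + hE H) => match e with inl e => mE f e | inr e => mE g e end).

Definition is_coequalizer A B Q (f g : hom A B) (q : hom B Q) : Prop :=
  is_hom q /\ homeq (hcomp f q) (hcomp g q) /\
  forall X : hypergraph, wf_hg X -> forall h : hom B X, is_hom h ->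
    homeq (hcomp f h) (hcomp g h) ->
    exists u : hom Q X, is_hom u /\ homeq (hcomp q u) h /\
      forall u' : hom Q X, is_hom u' -> homeq (hcomp q u') h -> homeq u' u.

(* square  A -f-> B -g'-> D  =  A -g-> C -f'-> D  is a pushout *)
Definition is_pushout A B C D (f : hom A B) (g : hom A C) (f' : hom C D) (g' : hom B D)
  : Prop :=
  is_hom f' /\ is_hom g' /\ homeq (hcomp f g') (hcomp g f') /\
  forall X : hypergraph, wf_hg X -> forall (h : hom B X) (k : hom C X),
    is_hom h -> is_hom k -> homeq (hcomp f h) (hcomp g k) ->
    exists u : hom D X, is_hom u /\ homeq (hcomp g' u) h /\ homeq (hcomp f' u) k /\
      forall u' : hom D X, is_hom u' -> homeq (hcomp g' u') h -> homeq (hcomp f' u') k ->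
        homeq u' u.

Definition indeg (G : hypergraph) (v : hV G) : nat :=
  \sum_(e : hE G) count (pred1 v) (htgt e).
Definition outdeg (G : hypergraph) (v : hV G) : nat :=
  \sum_(e : hE G) count (pred1 v) (hsrc e).

Definition linked (G : hypergraph) (e e' : hE G) : bool :=
  has (fun v => v \in hsrc e') (htgt e).

Definition path_from_to (G : hypergraph) (v v' : hV G) (p : seq (hE G)) : bool :=
  match p with
  | [::] => false
  | e :: p' => [&& path (@linked G) e p', v \in hsrc e & v' \in htgt (last e p')]
  end.

Definition is_cycle (G : hypergraph) (p : seq (hE G)) : bool :=
  match p with
  | [::] => false
  | e :: p' => path (@linked G) e p' && has (fun v => v \in hsrc e) (htgt (last e p'))
  end.

Definition ma (G : hypergraph) : Prop :=
  (forall p : seq (hE G), ~~ is_cycle p) /\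
  (forall v : hV G, indeg v <= 1 /\ outdeg v <= 1).

Definition ma_cospan I O H (i : hom I H) (o : hom O H) : Prop :=
  discrete I /\ discrete O /\ ma H /\ is_hom i /\ is_hom o /\ mono i /\ mono o /\
  (forall v, (exists x, mV i x = v) <-> indeg v = 0) /\
  (forall v, (exists x, mV o x = v) <-> outdeg v = 0).

Definition strongly_connected (H : hypergraph) : Prop :=
  forall x y : hV H, indeg x = 0 -> outdeg y = 0 -> exists p, path_from_to x y p.

Definition disc (T : finType) : hypergraph :=
  @Hypergraph T void (fun e => of_void _ e) (fun e => of_void _ e)
    (fun e => of_void _ e).

Definition in_disc (G : hypergraph) : hypergraph :=
  disc {v : hV G | indeg v == 0}.
Definition out_disc (G : hypergraph) : hypergraph :=
  disc {v : hV G | outdeg v == 0}.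
Definition incl_in (G : hypergraph) : hom (in_disc G) G :=
  @Hom (in_disc G) G (fun v : {v : hV G | indeg v == 0} => val v) (fun e : void => of_void _ e).
Definition incl_out (G : hypergraph) : hom (out_disc G) G :=
  @Hom (out_disc G) G (fun v : {v : hV G | outdeg v == 0} => val v) (fun e : void => of_void _ e).

Record rule := Rule {
  rI : hypergraph; rO : hypergraph; rL : hypergraph; rR : hypergraph;
  riL : hom rI rL; roL : hom rO rL; riR : hom rI rR; roR : hom rO rR }.

Definition left_connected_rule (r : rule) : Prop :=
  wf_hg (rI r) /\ wf_hg (rO r) /\ wf_hg (rL r) /\ wf_hg (rR r) /\
  discrete (rI r) /\ discrete (rO r) /\
  ma_cospan (riL r) (roL r) /\ ma_cospan (riR r) (roR r) /\
  mono (copair (riL r) (roL r)) /\ strongly_connected (rL r).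

Definition left_connected_system (Rs : seq rule) : Prop :=
  forall r, List.In r Rs -> left_connected_rule r.

Definition convex_match L G (m : hom L G) : Prop :=
  is_hom m /\ mono m /\
  forall (v v' : hV G) (p : seq (hE G)),
    (exists x, mV m x = v) -> (exists x, mV m x = v') -> path_from_to v v' p ->
    forall e, e \in p -> exists d, mE m d = e.

Record derivation N M G (i : hom N G) (o : hom M G) (r : rule) (mt : hom (rL r) G) :=
  Derivation {
    d_C : hypergraph; d_k : hom (hsum (rI r) (rO r)) d_C; d_f : hom d_C G;
    d_H : hypergraph; d_g : hom d_C d_H; d_kR : hom (rR r) d_H;
    d_c : hom (hsum N M) d_C; d_iH : hom N d_H; d_oH : hom M d_H }.
Arguments derivation [N M G] i o r mt.

Definition is_derivation N M G (i : hom N G) (o : hom M G) r mt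
  (d : derivation i o r mt) : Prop :=
  wf_hg (d_C d) /\ wf_hg (d_H d) /\ convex_match mt /\
  is_hom (d_k d) /\ is_hom (d_c d) /\
  is_pushout (copair (riL r) (roL r)) (d_k d) (d_f d) mt /\
  is_pushout (copair (riR r) (roR r)) (d_k d) (d_g d) (d_kR d) /\
  homeq (hcomp (d_c d) (d_f d)) (copair i o) /\
  homeq (hcomp (d_c d) (d_g d)) (copair (d_iH d) (d_oH d)) /\
  ma_cospan (d_iH d) (d_oH d).

Definition pre_critical N M G (i : hom N G) (o : hom M G) r1 r2 m1 m2
  (d1 : derivation i o r1 m1) (d2 : derivation i o r2 m2) : Prop :=
  ma_cospan i o /\ is_derivation d1 /\ is_derivation d2 /\ epi (copair m1 m2).

Definition parallel N M G (i : hom N G) (o : hom M G) r1 r2 m1 m2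
  (d1 : derivation i o r1 m1) (d2 : derivation i o r2 m2) : Prop :=
  (exists h : hom (rL r1) (d_C d2), is_hom h /\ homeq (hcomp h (d_f d2)) m1) /\
  (exists h : hom (rL r2) (d_C d1), is_hom h /\ homeq (hcomp h (d_f d1)) m2).

Definition critical N M G (i : hom N G) (o : hom M G) r1 r2 m1 m2
  (d1 : derivation i o r1 m1) (d2 : derivation i o r2 m2) : Prop :=
  pre_critical d1 d2 /\ ~ parallel d1 d2.

Section EdgeGluing.
Variables (Li Lj : hypergraph) (M : {set (hE Li * hE Lj)}).

Definition edge_gluing_cond : Prop :=
  M != set0 /\
  (forall ee, ee \in M -> hlab ee.1 = hlab ee.2) /\
  (forall ee ee', ee \in M -> ee' \in M -> (ee.1 = ee'.1 \/ ee.2 = ee'.2) -> ee = ee').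

(* (v,v') is a node of gamma iff it is the k-th source (or k-th target) pair of some
   (e,e') in M, i.e. it occurs in the zip of their source (target) lists *)
Definition gnode (p : hV Li * hV Lj) : bool :=
  [exists ee in M, (p \in zip (hsrc ee.1) (hsrc ee.2)) ||
                   (p \in zip (htgt ee.1) (htgt ee.2))].
Definition gedge (ee : hE Li * hE Lj) : bool := ee \in M.

Definition gammaV : finType := {p : hV Li * hV Lj | gnode p}.
Definition gammaE : finType := {ee : hE Li * hE Lj | gedge ee}.

Definition gamma : hypergraph :=
  @Hypergraph gammaV gammaE
    (fun ee => pmap insub (zip (hsrc (val ee).1) (hsrc (val ee).2)))
    (fun ee => pmap insub (zip (htgt (val ee).1) (htgt (val ee).2)))
    (fun ee => hlab (val ee).1).

Definition gamma_p1 : hom gamma Li :=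
  @Hom gamma Li (fun p : gammaV => (val p).1) (fun ee : gammaE => (val ee).1).
Definition gamma_p2 : hom gamma Lj :=
  @Hom gamma Lj (fun p : gammaV => (val p).2) (fun ee : gammaE => (val ee).2).
End EdgeGluing.

Definition hyperedge_gluing (Li Lj S : hypergraph) (M : {set (hE Li * hE Lj)})
  (eps : hom (hsum Li Lj) S) : Prop :=
  edge_gluing_cond M /\
  is_coequalizer (hcomp (gamma_p1 M) (iota1 Li Lj)) (hcomp (gamma_p2 M) (iota2 Li Lj)) eps.

Section NodeGluing.
Variables (Li Lj S : hypergraph) (eps : hom (hsum Li Lj) S) (N : {set (hV S * hV S)}).

Definition I1 : pred (hV S) := fun v =>
  (indeg v == 0) && [exists x : hV Li, (indeg x == 0) && (mV eps (inl x) == v)].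
Definition I2 : pred (hV S) := fun v =>
  (indeg v == 0) && [exists x : hV Lj, (indeg x == 0) && (mV eps (inr x) == v)].
Definition O1 : pred (hV S) := fun v =>
  (outdeg v == 0) && [exists x : hV Li, (outdeg x == 0) && (mV eps (inl x) == v)].
Definition O2 : pred (hV S) := fun v =>
  (outdeg v == 0) && [exists x : hV Lj, (outdeg x == 0) && (mV eps (inr x) == v)].

Definition node_gluing_cond : Prop :=
  (forall pr, pr \in N -> (I1 pr.1 && O2 pr.2) || (I2 pr.1 && O1 pr.2)) /\
  (forall pr pr', pr \in N -> pr' \in N ->
     [|| pr.1 == pr'.1, pr.1 == pr'.2, pr.2 == pr'.1 | pr.2 == pr'.2] -> pr = pr').

Definition gamma' : hypergraph := disc {pr : hV S * hV S | pr \in N}.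
Definition gamma'_p1 : hom gamma' S :=
  @Hom gamma' S (fun pr : {pr : hV S * hV S | pr \in N} => (val pr).1) (fun e : void => of_void _ e).
Definition gamma'_p2 : hom gamma' S :=
  @Hom gamma' S (fun pr : {pr : hV S * hV S | pr \in N} => (val pr).2) (fun e : void => of_void _ e).
End NodeGluing.

Definition node_gluing (Li Lj S S' : hypergraph) (eps : hom (hsum Li Lj) S)
  (N : {set (hV S * hV S)}) (eps' : hom S S') : Prop :=
  node_gluing_cond eps N /\ is_coequalizer (gamma'_p1 N) (gamma'_p2 N) eps'.

Definition yields_critical_pair (ri rj : rule) (S S' : hypergraph)
  (eps : hom (hsum (rL ri) (rL rj)) S) (eps' : hom S S') : Prop :=
  let m1 := hcomp (hcomp (iota1 (rL ri) (rL rj)) eps) eps' in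
  let m2 := hcomp (hcomp (iota2 (rL ri) (rL rj)) eps) eps' in
  mono m1 /\ mono m2 /\ ma_cospan (incl_in S') (incl_out S') /\
  exists (d1 : derivation (incl_in S') (incl_out S') ri m1)
         (d2 : derivation (incl_in S') (incl_out S') rj m2),
    critical d1 d2.

End Hyp.

(* Main.v *)
Require Import Defs.
From mathcomp Require Import ssreflect ssrfun ssrbool eqtype ssrnat seq path choice fintype finfun bigop finset.
Set Implicit Arguments. Unset Strict Implicit. Unset Printing Implicit Defensive.

Section Aux.
Variable Sg : signature.
Implicit Types G L : hypergraph Sg.

Lemma outdeg_uniq G (v : hV G) e1 e2 :
  outdeg v <= 1 -> v \in hsrc e1 -> v \in hsrc e2 -> e1 = e2.
Proof.
move=> H1 H2 H3; apply/eqP; apply/negPn/negP => ne.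
move: H1; rewrite /outdeg (bigD1 e1) //= (bigD1 e2) /=; last by rewrite eq_sym.
have c1 : 0 < count (pred1 v) (hsrc e1) by rewrite -has_count has_pred1.
have c2 : 0 < count (pred1 v) (hsrc e2) by rewrite -has_count has_pred1.
move: c1 c2; case: (count _ (hsrc e1)) => // a; case: (count _ (hsrc e2)) => // b.
by rewrite addSn addnA addnS.
Qed.

Lemma indeg_uniq G (v : hV G) e1 e2 :
  indeg v <= 1 -> v \in htgt e1 -> v \in htgt e2 -> e1 = e2.
Proof.
move=> H1 H2 H3; apply/eqP; apply/negPn/negP => ne.
move: H1; rewrite /indeg (bigD1 e1) //= (bigD1 e2) /=; last by rewrite eq_sym.
have c1 : 0 < count (pred1 v) (htgt e1) by rewrite -has_count has_pred1.
have c2 : 0 < count (pred1 v) (htgt e2) by rewrite -has_count has_pred1.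
move: c1 c2; case: (count _ (htgt e1)) => // a; case: (count _ (htgt e2)) => // b.
by rewrite addSn addnA addnS.
Qed.

Lemma indeg_pos G (v : hV G) e : v \in htgt e -> indeg v != 0.
Proof.
move=> H; rewrite /indeg (bigD1 e) //=.
have : 0 < count (pred1 v) (htgt e) by rewrite -has_count has_pred1.
by case: (count _ _).
Qed.

Lemma outdeg_pos G (v : hV G) e : v \in hsrc e -> outdeg v != 0.
Proof.
move=> H; rewrite /outdeg (bigD1 e) //=.
have : 0 < count (pred1 v) (hsrc e) by rewrite -has_count has_pred1.
by case: (count _ _).
Qed.

Lemma indeg_ex G (v : hV G) : indeg v != 0 -> exists e, v \in htgt e.
Proof.
move=> H; case: (boolP [exists e, v \in htgt e]) => [/existsP //|/existsPn Hn]; move/eqP: H; case.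
rewrite /indeg big1 // => e _; move: (Hn e).
by rewrite -has_pred1 has_count; case: (count _ _).
Qed.

Lemma outdeg_ex G (v : hV G) : outdeg v != 0 -> exists e, v \in hsrc e.
Proof.
move=> H; case: (boolP [exists e, v \in hsrc e]) => [/existsP //|/existsPn Hn]; move/eqP: H; case.
rewrite /outdeg big1 // => e _; move: (Hn e).
by rewrite -has_pred1 has_count; case: (count _ _).
Qed.

Lemma hom_src G H (f : hom G H) v e : is_hom f -> v \in hsrc e -> mV f v \in hsrc (mE f e).
Proof. by case=> [Hs _] Hv; rewrite Hs map_f. Qed.
Lemma hom_tgt G H (f : hom G H) v e : is_hom f -> v \in htgt e -> mV f v \in htgt (mE f e).
Proof. by case=> [_ [Ht _]] Hv; rewrite Ht map_f. Qed.

Lemma hcomp_hom G H K (f : hom G H) (g : hom H K) : is_hom f -> is_hom g -> is_hom (hcomp f g).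
Proof.
move=> [f1 [f2 f3]] [g1 [g2 g3]]; split; [|split] => e /=.
- by rewrite g1 f1 -map_comp.
- by rewrite g2 f2 -map_comp.
- by rewrite g3 f3.
Qed.

Lemma path_map G H (f : hom G H) v v' p : is_hom f -> path_from_to v v' p ->
  path_from_to (mV f v) (mV f v') (map (mE f) p).
Proof.
move=> Hf; case: p => [|e p] //= /and3P [Hp Hs Ht].
apply/and3P; split.
- apply: homo_path Hp => a b; rewrite /linked => /hasP [c Hc1 Hc2]; apply/hasP; exists (mV f c).
  + exact: hom_tgt. + exact: hom_src.
- exact: hom_src.
- by rewrite last_map; apply: hom_tgt.
Qed.

Lemma ptt_cat G (a b c : hV G) p q : path_from_to a b p -> path_from_to b c q ->
  path_from_to a c (p ++ q).
Proof.
case: p => [|e p] //; case: q => [|f q] //= /and3P [Hp Hs Ht] /and3P [Hq Hs' Ht'].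
rewrite cat_path last_cat /= Hp Hq Hs Ht' /= !andbT.
by apply/hasP; exists b.
Qed.

Lemma ptt_cycle G (v : hV G) p : ma G -> path_from_to v v p -> False.
Proof.
case=> Hc _; case: p => [|e p] //= /and3P [Hp Hs Ht].
move: (Hc (e :: p)); rewrite /= Hp /=; move/negP; apply.
by apply/hasP; exists v.
Qed.

Lemma ptt_rcons G (a b : hV G) p e : path_from_to a b (rcons p e) ->
  b \in htgt e /\ ((p = [::] /\ a \in hsrc e) \/ exists c, path_from_to a c p /\ c \in hsrc e).
Proof.
case: p => [|e0 p] /=; first by move=> /andP [Hs Ht]; split=> //; left.
rewrite rcons_path last_rcons => /and3P [/andP [Hp Hl] Hs Ht]; split=> //; right.
case/hasP: Hl => c Hc1 Hc2; exists c; split=> //; apply/and3P; split=> //.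
Qed.

Lemma mono_convex L G (m : hom L G) : is_hom m -> injective (mV m) ->
  strongly_connected L -> ma G ->
  forall x y p, path_from_to (mV m x) (mV m y) p -> forall e, e \in p -> exists d, mE m d = e.
Proof.
move=> Hm Hinj Hsc HG.
have Hsrc_inv : forall w d, mV m w \in hsrc (mE m d) -> w \in hsrc d.
  by move=> w d; case: Hm => [-> _]; rewrite mem_map.
have LB : forall w y p, outdeg w = 0 -> path_from_to (mV m w) (mV m y) p -> False.
  move=> w y p Hw; elim/last_ind: p y => [|p e IH] y //.
  move=> Hpath; have [Hy Hrest] := ptt_rcons Hpath.
  case: (boolP [exists d, mE m d == e]) => [/existsP [d /eqP Hd]|Hn].
  - subst e; case: Hrest => [[_ Hs]|[c [Hc Hcs]]].
    + by move/Hsrc_inv/outdeg_pos: Hs; rewrite Hw.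
    + case: Hm => [Hs1 _]; move: Hcs; rewrite Hs1 => /mapP [t0 _ Ec]; subst c.
      exact: (IH t0).
  - case: (boolP (indeg y == 0)) => [/eqP Hy0|/indeg_ex [d Hd]].
    + have [q Hq] := Hsc y w Hy0 Hw.
      exact: (ptt_cycle HG (ptt_cat Hpath (path_map Hm Hq))).
    + have Hmd := hom_tgt Hm Hd.
      have := indeg_uniq (proj1 (proj2 HG (mV m y))) Hy Hmd => Hed.
      by move/existsPn: Hn => /(_ d); rewrite Hed eqxx.
move=> x y p; elim: p x => [|e p IH] x //= /and3P [Hp Hs Ht].
case: (boolP (outdeg x == 0)) => [/eqP Hx0|/outdeg_ex [d Hd]].
  by case: (LB x y (e :: p) Hx0); rewrite /= Hp Hs Ht.
have He : e = mE m d := outdeg_uniq (proj2 (proj2 HG (mV m x))) Hs (hom_src Hm Hd).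
move=> e'; rewrite inE => /orP [/eqP ->|He']; first by exists d.
case: p Hp Ht IH He' => [|f p] //= /andP [Hl Hp] Ht IH He'.
case/hasP: Hl => c Hc1 Hc2.
move: Hc1; rewrite He; case: Hm => [_ [Ht1 _]]; rewrite Ht1 => /mapP [t0 _ Hc].
subst c; apply: (IH t0) => //; by rewrite /= Hp Hc2 Ht.
Qed.

End Aux.

Theorem mainTheorem9 (Sg : signature) (Rs : seq (rule Sg)) (ri rj : rule Sg)
  (M : {set (hE (rL ri) * hE (rL rj))})
  (S : hypergraph Sg) (eps : hom (hsum (rL ri) (rL rj)) S)
  (N : {set (hV S * hV S)}) (S' : hypergraph Sg) (eps' : hom S S') :
  left_connected_system Rs -> List.In ri Rs -> List.In rj Rs ->
  wf_hg S -> wf_hg S' ->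
  hyperedge_gluing M eps ->
  node_gluing eps N eps' ->
  yields_critical_pair eps eps' ->
  forall (r : rule Sg) (m : hom (rL r) S),
    List.In r Rs -> convex_match m -> convex_match (hcomp m eps').
Proof.
move=> Hsys Hri Hrj wfS wfS' Heg [[Ncond Ndisj] [Heps' [Hcq Huniv]]] Hy r m Hr [Hm [[HmV HmE] _]].
case: Hy => _ [_ [[_ [_ [maS' _]]] _]].
have [_ [_ [_ [_ [_ [_ [_ [_ [_ Hsc]]]]]]]]] := Hsys r Hr.
pose h := fun v : hV S => if [pick pr in N | pr.2 == v] is Some pr then pr.1 else v.
pose X := @Hypergraph Sg (hV S) (hE S) (fun e => map h (hsrc e)) (fun e => map h (htgt e)) (@hlab Sg S).
pose hh := @Hom Sg S X h (fun e => e).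
have wfX : wf_hg X by move=> e; rewrite /= !size_map; exact: wfS e.
have homhh : is_hom hh by split; [|split] => e.
have hN : forall pr, pr \in N -> h pr.1 = pr.1 /\ h pr.2 = pr.1.
  move=> pr Hpr; split; rewrite /h; case: pickP => [pr' /andP [Hin /eqP E]|Hn] //.
  - have -> // : pr' = pr by apply: Ndisj => //; rewrite E eqxx !orbT.
  - have -> // : pr' = pr by apply: Ndisj => //; rewrite E eqxx !orbT.
  - by move: (Hn pr); rewrite Hpr eqxx.
have Heq : homeq (hcomp (gamma'_p1 N) hh) (hcomp (gamma'_p2 N) hh).
  split => [[pr Hpr]|[]] /=.
  by case: (hN pr Hpr) => -> ->.
have [u [Hu [[HuV HuE] _]]] := Huniv X wfX hh homhh Heq.
have einj : injective (mE eps').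
  by move=> e1 e2 E; have := HuE e1; have := HuE e2; rewrite /= E => ->.
have Hnode : forall a b, mV eps' a = mV eps' b -> a = b \/ (a, b) \in N \/ (b, a) \in N.
  move=> a b E; have : h a = h b by have := HuV a; have := HuV b; rewrite /= E => ->.
  rewrite /h; case: pickP => [[p1 p2] /andP [Ha /eqP /= Ea]|Hna];
    case: pickP => [[q1 q2] /andP [Hb /eqP /= Eb]|Hnb] /= E'.
  - have Epq : (p1, p2) = (q1, q2) by apply: Ndisj => //; rewrite /= E' eqxx.
    by case: Epq => _ E2; left; rewrite -Ea -Eb E2.
  - by subst; right; right.
  - by subst; right; left.
  - by left.
have bad : forall x y, (mV m x, mV m y) \in N -> False.
  move=> x y H; have Hc := Ncond _ H.
  have [Hix Hoy] : indeg (mV m x) = 0 /\ outdeg (mV m y) = 0.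
    by move: Hc => /= /orP [/andP [/andP [/eqP -> _] /andP [/eqP -> _]]|/andP [/andP [/eqP -> _] /andP [/eqP -> _]]].
  have Hx0 : indeg x = 0.
    case: (boolP (indeg x == 0)) => [/eqP //|/indeg_ex [d Hd]].
    by move: (indeg_pos (hom_tgt Hm Hd)); rewrite Hix.
  have Hy0 : outdeg y = 0.
    case: (boolP (outdeg y == 0)) => [/eqP //|/outdeg_ex [d Hd]].
    by move: (outdeg_pos (hom_src Hm Hd)); rewrite Hoy.
  have [q Hq] := Hsc x y Hx0 Hy0.
  have Hq' := path_map (hcomp_hom Hm Heps') Hq.
  have Exy : mV eps' (mV m x) = mV eps' (mV m y).
    by have := proj1 Hcq (exist _ (mV m x, mV m y) H).
  apply: (ptt_cycle maS' (v := mV eps' (mV m x))).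
  by move: Hq'; rewrite /= -Exy; apply.
have injc : injective (mV (hcomp m eps')).
  move=> x y /= E; case: (Hnode _ _ E) => [/HmV //|[H|H]]; exfalso.
  - exact: (bad x y).
  - exact: (bad y x).
split; first exact: hcomp_hom.
split; first by split => // d1 d2 /= E; apply: HmE; apply: einj.
move=> v v' p [x <-] [y <-] Hp e He.
exact: (mono_convex (hcomp_hom Hm Heps') injc Hsc maS' Hp He).
Qed.
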